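(* Let $A(t)=\sum_{n\ge1}|\mathbf{I}_n(201,210)|\,t^n$. Then $A$ satisfies $$(2t^2-2t+1)A^2+(4t^2-3t)A+2t^2=0,$$ and $$A(t)=\frac{3t-4t^2-t\sqrt{1-8t}}{4t^2-4t+2}.$$
   Context: $\mathbf{I}_n=\{(e_1,\dots,e_n)\in\mathbb{N}^n:0\le e_i<i\}$. $\mathbf{I}_n(201,210)$ is the set of $e\in\mathbf{I}_n$ with no indices $i<j<k$ such that $e_j<e_k<e_i$ and no indices $i<j<k$ such that $e_i>e_j>e_k$. *)

(* Defs.v *)
From mathcomp Require Import all_boot all_order all_algebra.
Set Implicit Arguments. Unset Strict Implicit. Unset Printing Implicit Defensive.
Import GRing.Theory Num.Theory.
Local Open Scope ring_scope.

(* Inversion sequences of length n, 0-indexed: position i (0 <= i < n)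
   corresponds to e_{i+1}, and the condition 0 <= e_{i+1} < i+1 is e i <= i.
   We represent e as an n-tuple with entries in 'I_n (every admissible entry
   is < n). *)
Definition is_invseq (n : nat) (e : n.-tuple 'I_n) : bool :=
  [forall i : 'I_n, (tnth e i <= i)%N].

Definition avoids_201_210 (n : nat) (e : n.-tuple 'I_n) : bool :=
  [forall i : 'I_n, forall j : 'I_n, forall k : 'I_n,
     ((i < j)%N && (j < k)%N) ==>
     ~~ (((tnth e j < tnth e k)%N && (tnth e k < tnth e i)%N)
         || ((tnth e j < tnth e i)%N && (tnth e k < tnth e j)%N))].

Definition numI (n : nat) : nat :=
  #|[pred e : n.-tuple 'I_n | is_invseq e && avoids_201_210 e]|.

Definition fps := nat -> rat.
Definition fmul (f g : fps) : fps := fun n => \sum_(i < n.+1) f i * g (n - i)%N.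
Definition fadd (f g : fps) : fps := fun n => f n + g n.
Definition fpoly (s : seq rat) : fps := fun n => nth 0 s n.

Definition Aser : fps := fun n => if n == 0%N then 0 else (numI n)%:R.

Definition gbinom (a : rat) (k : nat) : rat :=
  (\prod_(i < k) (a - i%:R)) / (k`!)%:R.

(* sqrt(1 - 8t) = sum_k binom(1/2, k) (-8)^k t^k  (the branch with constant term 1) *)
Definition sqrt_1m8t : fps := fun k => gbinom (1 / 2) k * (-8) ^+ k.

(* Main.v *)
Require Import Defs.
From mathcomp Require Import all_boot all_order all_algebra.
From mathcomp Require Import zify ring.
Ltac rring := ring.
Ltac rfield := field.
From Stdlib Require Import FunctionalExtensionality Ring.
Import GRing.Theory Num.Theory.
Local Open Scope ring_scope.

Definition tr (n : nat) (f : fps) : {poly rat} := \poly_(i < n.+1) f i.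

Lemma fmul_poly (f g : fps) n (p q : {poly rat}) :
  (forall i, (i <= n)%N -> p`_i = f i) -> (forall i, (i <= n)%N -> q`_i = g i) ->
  fmul f g n = (p * q)`_n.
Proof.
move=> Hp Hq; rewrite coefM /fmul; apply: eq_bigr => i _.
by rewrite Hp ?Hq // ?leq_subr // -ltnS.
Qed.

Lemma tr_coef n f i : (i <= n)%N -> (tr n f)`_i = f i.
Proof. by move=> H; rewrite coef_poly ltnS H. Qed.

Lemma fmulC f g n : fmul f g n = fmul g f n.
Proof.
rewrite (@fmul_poly f g n (tr n f) (tr n g)); try exact: tr_coef.
rewrite (@fmul_poly g f n (tr n g) (tr n f)); try exact: tr_coef.
by rewrite mulrC.
Qed.

Lemma fmulA f g h n : fmul (fmul f g) h n = fmul f (fmul g h) n.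
Proof.
rewrite (@fmul_poly _ h n (tr n f * tr n g) (tr n h)); last exact: tr_coef.
  rewrite (@fmul_poly f _ n (tr n f) (tr n g * tr n h)); first by rewrite mulrA.
    exact: tr_coef.
  move=> i Hi; apply/esym; apply: fmul_poly => j Hj; apply: tr_coef;
    exact: leq_trans Hj Hi.
move=> i Hi; apply/esym; apply: fmul_poly => j Hj; apply: tr_coef;
  exact: leq_trans Hj Hi.
Qed.

Definition fzero : fps := fun _ => 0.
Definition fone : fps := fun n => if n == 0%N then 1 else 0.
Definition fopp (f : fps) : fps := fun n => - f n.
Definition fsub (f g : fps) : fps := fadd f (fopp g).

Lemma fmulDl f g h n : fmul (fadd f g) h n = fadd (fmul f h) (fmul g h) n.
Proof. by rewrite /fmul /fadd -big_split; apply: eq_bigr => i _; rewrite mulrDl. Qed.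

Lemma fmul1 f n : fmul fone f n = f n.
Proof.
rewrite /fmul big_ord_recl /= /fone /= mul1r subn0 big1 ?addr0 // => i _.
by rewrite mul0r.
Qed.

Lemma fps_ext (f g : fps) : (forall n, f n = g n) -> f = g.
Proof. exact: functional_extensionality. Qed.

Lemma fps_ring : ring_theory fzero fone fadd fmul fsub fopp (@eq fps).
Proof.
split=> *; apply: fps_ext => n.
- by rewrite /fadd /fzero add0r.
- by rewrite /fadd addrC.
- by rewrite /fadd addrA.
- exact: fmul1.
- exact: fmulC.
- by rewrite fmulA.
- exact: fmulDl.
- by [].
- by rewrite /fadd /fopp /fzero subrr.
Qed.

Add Ring fpsR : fps_ring.



Fixpoint cn (k a d : nat) : nat :=
  if k is k'.+1 then
    (a * cn k' 1 d.+1 + cn k' a d.+1 + \sum_(j < d) cn k' (a + j.+1) (d - j))%N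
  else 1%N.

Definition crat k a d : rat := (cn k a d)%:R.

Definition stepop (f : nat -> nat -> rat) (a d : nat) : rat :=
  a%:R * f 1%N d.+1 + f a d.+1 + \sum_(j < d) f (a + j.+1)%N (d - j)%N.

Lemma crat_S k a d : crat k.+1 a d = stepop (crat k) a d.
Proof. by rewrite /crat /stepop /= !natrD natrM natr_sum. Qed.

Lemma stepop_ext f g a d : (forall a d, f a d = g a d) -> stepop f a d = stepop g a d.
Proof. by move=> H; rewrite /stepop !H; congr (_ + _); apply: eq_bigr => j _; rewrite H. Qed.

Lemma stepop_add f g a d :
  stepop (fun a d => f a d + g a d) a d = stepop f a d + stepop g a d.
Proof. rewrite /stepop big_split /=; rring. Qed.

Lemma stepop_mulr f c a d : stepop (fun a d => f a d * c) a d = stepop f a d * c.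
Proof. rewrite /stepop -mulr_suml; rring. Qed.

Lemma stepop_sum k (F : nat -> nat -> nat -> rat) a d :
  stepop (fun a d => \sum_(p < k) F p a d) a d = \sum_(p < k) stepop (F p) a d.
Proof.
elim: k => [|k IH].
  rewrite big_ord0 /stepop /= !big_ord0 big1 ?mulr0 ?addr0 // => j _.
  by rewrite big_ord0.
rewrite big_ord_recr /= -IH -stepop_add; apply: stepop_ext => a' d'.
by rewrite big_ord_recr.
Qed.

Lemma stepop_shift f a d :
  stepop f a d.+1 = stepop (fun a d => f a d.+1) a d + f (a + d.+1)%N 1%N.
Proof.
rewrite /stepop big_ord_recr /= subSnn -!addrA; congr (_ + (_ + _)).
congr (_ + _); apply: eq_bigr => j _.
by rewrite subSn // ltnW.
Qed.

Definition Xc k d := crat k 0 d.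
Definition Yc k d := crat k 1 d - crat k 0 d.

Lemma crat_lin k a d : crat k a d = Xc k d + a%:R * Yc k d.
Proof.
elim: k a d => [|k IH] a d; first by rewrite /Xc /Yc /crat /= subrr mulr0 addr0.
have Hs : forall b, \sum_(j < d) crat k (b + j.+1) (d - j) =
   \sum_(j < d) Xc k (d - j) + b%:R * \sum_(j < d) Yc k (d - j)
   + \sum_(j < d) (j.+1)%:R * Yc k (d - j).
  move=> b; rewrite mulr_sumr -!big_split /=; apply: eq_bigr => j _.
  rewrite IH natrD; rring.
rewrite /Yc /Xc !crat_S /stepop !Hs !IH; rring.
Qed.

Definition Pk r := crat r 0 1.
Definition Qk r := crat r 1 1 - crat r 0 1.

Definition Rk k a d := \sum_(p < k) (crat p a d * Pk (k.-1 - p) + crat p.+1 a d * Qk (k.-1 - p)).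

Lemma crat1 a d : crat 1 a d = (a + d.+1)%:R.
Proof.
rewrite crat_S /stepop /crat /= (eq_bigr (fun _ => 1)) // sumr_const card_ord.
by rewrite !natrD mulr1 -[d%:R]mulr1n; rring.
Qed.

Lemma Rk_S k a d : Rk k.+1 a d = crat k (a + d.+1) 1 + stepop (Rk k) a d.
Proof.
rewrite /Rk big_ord_recl /= subn0 crat1.
rewrite (stepop_sum k (fun p a0 d0 => crat p a0 d0 * Pk (k.-1 - p) + crat p.+1 a0 d0 * Qk (k.-1 - p))).
have -> : crat 0 a d = 1 by [].
rewrite (crat_lin k (a + d.+1)) mul1r; congr (_ + _); apply: eq_bigr => p _.
rewrite (stepop_add (fun a0 d0 => crat p a0 d0 * Pk (k.-1 - p)) (fun a0 d0 => crat p.+1 a0 d0 * Qk (k.-1 - p))).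
rewrite (stepop_mulr (crat p)) (stepop_mulr (crat p.+1)) -!crat_S.
have -> : (k - bump 0 p = k.-1 - p)%N by rewrite /bump /=; lia.
by [].
Qed.

Lemma crat_up k a d : crat k a d.+1 = crat k a d + Rk k a d.
Proof.
elim: k a d => [|k IH] a d; first by rewrite /Rk big_ord0 addr0.
rewrite !crat_S stepop_shift.
rewrite (stepop_ext (fun a d => crat k a d.+1) (fun a d => crat k a d + Rk k a d) a d IH).
rewrite (stepop_add (crat k) (Rk k)) Rk_S; rring.
Qed.

Local Open Scope nat_scope.
Definition pat (x y z : nat) : bool := ((y < z) && (z < x)) || ((y < x) && (z < y)).
Definition invS (s : seq nat) : bool := all (fun i => nth 0 s i <= i) (iota 0 (size s)).
Definition avS (s : seq nat) : bool :=
  all (fun i => all (fun j => all (fun k =>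
     (i < j) && (j < k) ==> ~~ pat (nth 0 s i) (nth 0 s j) (nth 0 s k))
     (iota 0 (size s))) (iota 0 (size s))) (iota 0 (size s)).
Definition Qv s := invS s && avS s.
Definition okext (s : seq nat) (w : nat) : bool :=
  all (fun i => all (fun j => ((i < j) && (w < nth 0 s i) && (nth 0 s j < nth 0 s i))
     ==> (nth 0 s j == w)) (iota 0 (size s))) (iota 0 (size s)).
Definition mxs (s : seq nat) := foldr maxn 0 s.
Definition alpha s := count (okext s) (iota 0 (mxs s)).

Lemma all_iotaP (P : pred nat) n : reflect (forall i, i < n -> P i) (all P (iota 0 n)).
Proof.
apply: (iffP allP) => H i.
  by move=> Hi; apply: H; rewrite mem_iota.
by rewrite mem_iota => /andP[_]; rewrite add0n; apply: H.
Qed.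

Lemma invSP s : reflect (forall i, i < size s -> nth 0 s i <= i) (invS s).
Proof. exact: all_iotaP. Qed.

Lemma avSP s : reflect (forall i j k, i < j -> j < k -> k < size s ->
    ~~ pat (nth 0 s i) (nth 0 s j) (nth 0 s k)) (avS s).
Proof.
apply: (iffP (all_iotaP _ _)) => H.
  move=> i j k Hij Hjk Hk.
  have Hi : i < size s by lia.
  have Hj : j < size s by lia.
  move: (H i Hi) => /all_iotaP /(_ j Hj) /all_iotaP /(_ k Hk).
  by rewrite Hij Hjk.
move=> i Hi; apply/all_iotaP => j Hj; apply/all_iotaP => k Hk.
by apply/implyP => /andP[Hij Hjk]; apply: H.
Qed.

Lemma okextP s w : reflect (forall i j, i < j -> j < size s -> w < nth 0 s i ->
    nth 0 s j < nth 0 s i -> nth 0 s j = w) (okext s w).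
Proof.
apply: (iffP (all_iotaP _ _)) => H.
  move=> i j Hij Hj H1 H2.
  have Hi : i < size s by lia.
  move: (H i Hi) => /all_iotaP /(_ j Hj).
  by rewrite Hij H1 H2 => /eqP.
move=> i Hi; apply/all_iotaP => j Hj.
by apply/implyP => /andP[/andP[Hij H1] H2]; apply/eqP; exact: (H i j Hij Hj H1 H2).
Qed.

Lemma mxs_rcons s x : mxs (rcons s x) = maxn (mxs s) x.
Proof.
elim: s => [|y s IH] /=; first by rewrite max0n maxn0.
by rewrite IH /= maxnA.
Qed.

Lemma nth_le_mxs s i : nth 0 s i <= mxs s.
Proof.
elim: s i => [|y s IH] [|i] //=; first exact: leq_maxl.
exact: leq_trans (IH i) (leq_maxr _ _).
Qed.

Lemma mxs_attained s : 0 < mxs s -> exists2 i, i < size s & nth 0 s i = mxs s.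
Proof.
elim: s => [|y s IH] //= Hp.
case: (leqP (mxs s) y) => H.
  by exists 0 => //; apply/esym/maxn_idPl.
have [i Hi Ei] := IH (leq_ltn_trans (leq0n y) H).
by exists i.+1 => //; rewrite Ei; apply/esym/maxn_idPr/ltnW.
Qed.

Lemma okext_ge s w : mxs s <= w -> okext s w.
Proof.
move=> H; apply/okextP => i j _ _ Hw _.
have := nth_le_mxs s i; lia.
Qed.

Lemma nth_rc s x i : nth 0 (rcons s x) i =
  if i < size s then nth 0 s i else if i == size s then x else 0.
Proof. by rewrite nth_rcons. Qed.

Lemma okext_rcons s v w :
  okext (rcons s v) w = okext s w && ((v == w) || (mxs s <= v) || (mxs s <= w)).
Proof.
apply/idP/idP.
  move/okextP => H; apply/andP; split.
    apply/okextP => i j Hij Hj H1 H2.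
    have := H i j Hij; rewrite size_rcons !nth_rc Hj (ltn_trans Hij Hj).
    by apply => //; apply: ltnW.
  case: (leqP (mxs s) v) => Hv; first by rewrite orbT.
  case: (leqP (mxs s) w) => Hw; first by rewrite !orbT.
  have [i Hi Ei] := @mxs_attained s (leq_ltn_trans (leq0n _) Hv).
  have := H i (size s) Hi; rewrite size_rcons ltnSn !nth_rc Hi ltnn eqxx Ei.
  by move=> /(_ erefl Hw Hv) ->; rewrite eqxx.
move=> /andP[/okextP H Hc]; apply/okextP => i j Hij; rewrite size_rcons ltnS.
rewrite leq_eqVlt => /orP[/eqP Ej|Hj].
  have Hi : i < size s by rewrite -Ej.
  rewrite !nth_rc Hi Ej ltnn eqxx => H1 H2.
  have := nth_le_mxs s i; move: Hc; lia.
rewrite !nth_rc Hj (ltn_trans Hij Hj); exact: H.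
Qed.

Lemma invS_rcons s x : invS (rcons s x) = invS s && (x <= size s).
Proof.
apply/idP/idP.
  move/invSP => H; apply/andP; split.
    apply/invSP => i Hi; have := H i; rewrite size_rcons nth_rc Hi; apply; lia.
  have := H (size s); rewrite size_rcons nth_rc ltnn eqxx; apply; lia.
move=> /andP[/invSP H Hx]; apply/invSP => i; rewrite size_rcons nth_rc ltnS.
rewrite leq_eqVlt => /orP[/eqP ->|Hi]; first by rewrite ltnn eqxx.
by rewrite Hi; apply: H.
Qed.

Lemma avS_rcons s x : avS (rcons s x) = avS s && okext s x.
Proof.
apply/idP/idP.
  move/avSP => H; apply/andP; split.
    apply/avSP => i j k Hij Hjk Hk; have := H i j k Hij Hjk.
    rewrite size_rcons !nth_rc Hk (ltn_trans Hjk Hk) (ltn_trans Hij (ltn_trans Hjk Hk)).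
    by apply; lia.
  apply/okextP => i j Hij Hj H1 H2.
  have := H i j (size s) Hij Hj; rewrite size_rcons ltnSn !nth_rc Hj (ltn_trans Hij Hj) ltnn eqxx.
  move=> /(_ erefl); rewrite /pat => H3; apply/eqP; move: H1 H2 H3; lia.
move=> /andP[/avSP H /okextP Ho]; apply/avSP => i j k Hij Hjk; rewrite size_rcons ltnS.
rewrite leq_eqVlt => /orP[/eqP Ek|Hk].
  have Hj : j < size s by rewrite -Ek.
  rewrite !nth_rc Ek ltnn eqxx Hj (ltn_trans Hij Hj) /pat.
  have := Ho i j Hij Hj; lia.
rewrite !nth_rc Hk (ltn_trans Hjk Hk) (ltn_trans Hij (ltn_trans Hjk Hk)); exact: H.
Qed.

Lemma Qv_rcons s x : Qv (rcons s x) = [&& Qv s, x <= size s & okext s x].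
Proof. rewrite /Qv invS_rcons avS_rcons; by case: (invS s); case: (avS s); case: (x <= size s); case: (okext s x). Qed.

Fixpoint countW (B : nat) (Q : seq nat -> bool) (k : nat) (pre : seq nat) : nat :=
  if k is k'.+1 then \sum_(x < B) countW B Q k' (rcons pre x) else Q pre.

Lemma sum_tuple_cons (T : finType) k (F : k.+1.-tuple T -> nat) :
  \sum_(t : k.+1.-tuple T) F t = \sum_(x : T) \sum_(t : k.-tuple T) F [tuple of x :: t].
Proof.
rewrite pair_bigA /=.
rewrite (reindex (fun p : T * k.-tuple T => [tuple of p.1 :: p.2])) //=.
exists (fun t => (thead t, [tuple of behead t])) => [[x t]|t] _ /=.
  by congr (_, _); apply: val_inj.
by rewrite -tuple_eta.
Qed.

Lemma card_countW B Q k pre :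
  #|[pred e : k.-tuple 'I_B | Q (pre ++ map val e)]| = countW B Q k pre.
Proof.
elim: k pre => [|k IH] pre.
  rewrite -sum1_card big_mkcond /=.
  rewrite (eq_bigr (fun _ => (Q pre : nat))); last first.
    move=> t _; rewrite (tuple0 t) inE /= cats0; by case: (Q pre).
  by rewrite sum_nat_const card_tuple expn0 mul1n.
rewrite -sum1_card big_mkcond /= sum_tuple_cons /=; apply: eq_bigr => x _.
rewrite -IH -sum1_card [RHS]big_mkcond /=; apply: eq_bigr => t _.
by rewrite !inE /= cat_rcons.
Qed.

Lemma countW_invalid B k s : ~~ Qv s -> countW B Qv k s = 0.
Proof.
elim: k s => [|k IH] s Hs /=; first by rewrite (negPf Hs).
rewrite big1 // => x _; apply: IH; rewrite Qv_rcons negb_and Hs //.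
Qed.

Lemma alpha_lt s x : okext s x -> x < mxs s -> alpha (rcons s x) = 1.
Proof.
move=> Ho Hx; rewrite /alpha mxs_rcons (maxn_idPl (ltnW Hx)).
rewrite (@eq_in_count _ _ (pred1 x)); last first.
  move=> w; rewrite mem_iota add0n => /andP[_ Hw] /=.
  rewrite okext_rcons leqNgt Hx leqNgt Hw /= orbF.
  case: (eqVneq w x) => [->|Hne]; first by rewrite Ho.
  by rewrite andbF.
by rewrite count_uniq_mem ?iota_uniq // mem_iota add0n Hx.
Qed.

Lemma alpha_eq s : alpha (rcons s (mxs s)) = alpha s.
Proof.
rewrite /alpha mxs_rcons maxnn; apply: eq_count => w.
by rewrite okext_rcons leqnn orbT andbT.
Qed.

Lemma alpha_gt s j : alpha (rcons s (mxs s + j.+1)) = alpha s + j.+1.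
Proof.
rewrite /alpha mxs_rcons (maxn_idPr (leq_addr _ _)).
rewrite (@eq_count _ _ (okext s)); last first.
  by move=> w; rewrite okext_rcons leq_addr orbT andbT.
rewrite iotaD count_cat add0n; congr (_ + _).
rewrite (@eq_in_count _ _ predT) ?count_predT ?size_iota //.
by move=> w; rewrite mem_iota => /andP[Hw _]; rewrite okext_ge.
Qed.

Lemma mxs_lt_size s : invS s -> s != [::] -> mxs s < size s.
Proof.
move=> /invSP H Hne; case: (posnP (mxs s)) => Hm.
  by rewrite Hm lt0n size_eq0.
have [i Hi <-] := @mxs_attained s Hm.
exact: leq_ltn_trans (H i Hi) Hi.
Qed.

Lemma sum_bool_count (r : seq nat) (b : pred nat) : \sum_(j <- r) (b j : nat) = count b r.
Proof. by elim: r => [|x r IH]; rewrite ?big_nil ?big_cons ?IH. Qed.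

Lemma countW_valid n k pre : Qv pre -> pre != [::] -> size pre + k <= n ->
  countW n Qv k pre = cn k (alpha pre) (size pre - mxs pre).
Proof.
elim: k pre => [|k IH] pre Hv Hne Hsz; first by rewrite /= Hv.
have Hinv : invS pre by case/andP: Hv.
have Hmx : mxs pre < size pre := @mxs_lt_size pre Hinv Hne.
pose F x := if (x <= size pre) && okext pre x then
   cn k (alpha (rcons pre x)) ((size pre).+1 - maxn (mxs pre) x) else 0.
have Hterm : forall x, countW n Qv k (rcons pre x) = F x.
  move=> x; rewrite /F; case: ifP => Hx.
    rewrite IH ?size_rcons ?mxs_rcons //; last by lia.
      by rewrite Qv_rcons Hv.
    by case: (pre).
  by apply: countW_invalid; rewrite Qv_rcons Hv /= Hx.
rewrite /= (eq_bigr (fun x : 'I_n => F x)); last by move=> x _; exact: Hterm.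
rewrite -(big_mkord xpredT F).
rewrite (@big_cat_nat _ _ _ (mxs pre)) //=; last by lia.
rewrite (big_cat_nat (m := mxs pre) (n := (mxs pre).+1)) //; last by lia.
rewrite (big_cat_nat (m := (mxs pre).+1) (n := (size pre).+1)) //; [|lia|lia].
rewrite big_nat1.
have P1 : \sum_(0 <= x < mxs pre) F x = alpha pre * cn k 1 (size pre - mxs pre).+1.
  rewrite (@eq_big_nat _ _ _ _ _ F (fun x => okext pre x * cn k 1 (size pre - mxs pre).+1)); last first.
    move=> x /andP[_ Hx]; rewrite /F.
    have -> : x <= size pre by lia.
    case: (boolP (okext pre x)) => Ho /=; last by rewrite mul0n.
    rewrite alpha_lt // (maxn_idPl (ltnW Hx)) mul1n; congr (cn _ _ _); lia.
  by rewrite -big_distrl /= sum_bool_count /index_iota subn0.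
have P2 : F (mxs pre) = cn k (alpha pre) (size pre - mxs pre).+1.
  rewrite /F (ltnW Hmx) okext_ge //= alpha_eq maxnn; congr (cn _ _ _); lia.
have P3 : \sum_((mxs pre).+1 <= x < (size pre).+1) F x =
    \sum_(j < size pre - mxs pre) cn k (alpha pre + j.+1) (size pre - mxs pre - j).
  rewrite -{1}[(mxs pre).+1]add0n big_addn subSS big_mkord; apply: eq_bigr => j _.
  have Hj : j < size pre - mxs pre by [].
  rewrite /F.
  have -> : (j + (mxs pre).+1 <= size pre) by lia.
  rewrite okext_ge /=; last by lia.
  have -> : j + (mxs pre).+1 = mxs pre + j.+1 by lia.
  rewrite alpha_gt (maxn_idPr (leq_addr _ _)); congr (cn _ _ _); lia.
have P4 : \sum_((size pre).+1 <= x < n) F x = 0.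
  rewrite big1_seq // => x; rewrite mem_index_iota => /andP[_ /andP[H1 _]].
  by rewrite /F leqNgt H1.
rewrite P1 P2 P3 P4 /=. change (alpha pre * cn k 1 (size pre - mxs pre).+1 + (cn k (alpha pre) (size pre - mxs pre).+1 + (\sum_(j < size pre - mxs pre) cn k (alpha pre + j.+1) (size pre - mxs pre - j) + 0)) = cn k.+1 (alpha pre) (size pre - mxs pre)). rewrite addn0 addnA. by [].
Qed.

Lemma nth_mapval n (e : n.-tuple 'I_n) (i : 'I_n) : nth 0 (map val e) i = tnth e i.
Proof. by rewrite (nth_map i) ?size_tuple // (tnth_nth i). Qed.

Lemma inv_eq n (e : n.-tuple 'I_n) : is_invseq e = invS (map val e).
Proof.
apply/idP/idP.
  move/forallP => H; apply/invSP => i; rewrite size_map size_tuple => Hi.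
  by rewrite (nth_mapval _ e (Ordinal Hi)); apply: (H (Ordinal Hi)).
move/invSP => H; apply/forallP => i.
by rewrite -nth_mapval; apply: H; rewrite size_map size_tuple.
Qed.

Lemma av_eq n (e : n.-tuple 'I_n) : avoids_201_210 e = avS (map val e).
Proof.
apply/idP/idP.
  move/forallP => H; apply/avSP => i j k Hij Hjk; rewrite size_map size_tuple => Hk.
  have Hj : j < n by lia.
  have Hi : i < n by lia.
  move: (H (Ordinal Hi)) => /forallP /(_ (Ordinal Hj)) /forallP /(_ (Ordinal Hk)).
  rewrite /= Hij Hjk /= (nth_mapval _ e (Ordinal Hi)) (nth_mapval _ e (Ordinal Hj)) (nth_mapval _ e (Ordinal Hk)).
  by [].
move/avSP => H; apply/forallP => i; apply/forallP => j; apply/forallP => k.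
apply/implyP => /andP[Hij Hjk].
have := H i j k Hij Hjk; rewrite size_map size_tuple ltn_ord !nth_mapval.
by move=> /(_ erefl).
Qed.

Lemma numI_cn k : numI k.+1 = cn k 0 1.
Proof.
rewrite /numI (eq_card (B := [pred e : k.+1.-tuple 'I_k.+1 | Qv ([::] ++ map val e)])); last first.
  by move=> e; rewrite !inE /= /Qv inv_eq av_eq.
rewrite card_countW /= big_ord_recl /=.
rewrite big1 ?addn0; last first.
  move=> x _; apply: countW_invalid. rewrite /Qv /invS /= /bump /=. by [].
by rewrite (countW_valid k.+1 k [:: 0]) // add1n.
Qed.

Local Open Scope ring_scope.

Declare Scope fps_scope.
Delimit Scope fps_scope with F.
Notation "x ⊕ y" := (fadd x y) (at level 50, left associativity) : fps_scope.
Notation "x ⊖ y" := (fsub x y) (at level 50, left associativity) : fps_scope.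
Notation "x ⊗ y" := (fmul x y) (at level 40, left associativity) : fps_scope.
Notation "𝟙" := fone : fps_scope.
Notation "𝟘" := fzero : fps_scope.
Notation "𝟚" := (fadd fone fone) : fps_scope.
Definition tX : fps := fun n => if n == 1%N then 1 else 0.

Lemma coef_tmul (f : fps) n : fmul tX f n = if n is n'.+1 then f n' else 0.
Proof.
rewrite /fmul; case: n => [|n].
  by rewrite big_ord_recl big_ord0 /tX /= mul0r addr0.
rewrite big_ord_recl /= /tX /= mul0r add0r big_ord_recl /= subn1 /= mul1r.
by rewrite big1 ?addr0 // => i _; rewrite /bump /= mul0r.
Qed.

Lemma c0_mul (f g : fps) : fmul f g 0 = f 0%N * g 0%N.
Proof. by rewrite /fmul big_ord_recl big_ord0 addr0. Qed.

Lemma conv_t (f g : fps) k : \sum_(p < k) f p * g (k.-1 - p)%N = fmul tX (fmul f g) k.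
Proof. by rewrite coef_tmul; case: k => [|k]; rewrite ?big_ord0. Qed.

Lemma conv_m1 (f g : fps) k : f 0%N = 1 ->
  \sum_(p < k) f p.+1 * g (k.-1 - p)%N = fmul (fsub f fone) g k.
Proof.
move=> H; rewrite /fmul big_ord_recl /fsub /fadd /fopp /fone /= H subrr mul0r add0r.
apply: eq_bigr => i _; rewrite /bump /= subr0 add1n; congr (_ * g _); lia.
Qed.

Lemma tX_cancel (f g : fps) : fmul tX f = fmul tX g -> f = g.
Proof.
move=> H; apply: fps_ext => n.
by have := congr1 (fun h => h n.+1) H; rewrite /= !coef_tmul.
Qed.

Lemma unit_cancel (u f : fps) : u 0%N != 0 -> fmul u f = fzero -> f = fzero.
Proof.
move=> Hu H; apply: fps_ext => n; elim: n {-2}n (leqnn n) => [|n IH] m Hm.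
  have := congr1 (fun h => h 0%N) H; rewrite /= c0_mul /fzero.
  move: Hm; rewrite leqn0 => /eqP ->; move/eqP; rewrite mulf_eq0 (negPf Hu) /=.
  by move/eqP.
case: (ltnP m n.+1) => Hmn; first exact: IH.
have Em : m = n.+1 by apply/eqP; rewrite eqn_leq Hm.
have := congr1 (fun h => h m) H; rewrite /= /fmul big_ord_recl /= subn0.
rewrite big1 ?addr0; last first.
  move=> i _; rewrite IH ?mulr0 //; rewrite /bump /=; lia.
by move/eqP; rewrite mulf_eq0 (negPf Hu) /= => /eqP.
Qed.

Definition Pf : fps := fun k => Pk k.
Definition Qf : fps := fun k => Qk k.

Lemma Pf0 : Pf 0%N = 1. Proof. by []. Qed.

Lemma fmul2 (f : fps) n : fmul (fadd fone fone) f n = f n + f n.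
Proof. by rewrite fmulDl /fadd fmul1. Qed.

Local Open Scope fps_scope.

Lemma EP : Pf = 𝟙 ⊕ tX ⊗ (𝟚 ⊗ Pf ⊕ Qf ⊕ tX ⊗ (Pf ⊗ Pf) ⊕ (Pf ⊖ 𝟙) ⊗ Qf).
Proof.
apply: fps_ext => [[|k]]; first by rewrite /fadd coef_tmul /fone /= addr0.
rewrite /fadd coef_tmul /fone /= add0r /fadd fmul2.
rewrite /Pf /Pk crat_S /stepop /= mul0r add0r big_ord1 /= add0n subn0 crat_up /Rk.
rewrite big_split /= -conv_t -conv_m1 //=.
rewrite /Qf /Qk /Pk; rring.
Qed.

Definition C1f : fps := Pf ⊕ Qf.

Lemma C1f_eq : C1f = (fun r => crat r 1 1).
Proof. by apply: fps_ext => r; rewrite /C1f /fadd /Pf /Qf /Pk /Qk; rring. Qed.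

Lemma EC : C1f = 𝟙 ⊕ tX ⊗ (𝟚 ⊗ C1f ⊕ 𝟚 ⊗ (tX ⊗ (C1f ⊗ Pf) ⊕ (C1f ⊖ 𝟙) ⊗ Qf) ⊕ Pf ⊕ 𝟚 ⊗ Qf).
Proof.
apply: fps_ext => [[|k]]; first by rewrite /fadd coef_tmul /fone /C1f /fadd /Pf /Qf /Pk /Qk /= subrr addr0.
rewrite /fadd coef_tmul /fone /= add0r /fadd !fmul2 /fadd.
rewrite -conv_t -conv_m1; last by rewrite C1f_eq.
rewrite C1f_eq /= crat_S /stepop /= mul1r big_ord1 /= subn0 crat_up /Rk.
rewrite big_split /=.
rewrite (crat_lin k 2) /Xc /Yc /Pf /Qf /Pk /Qk; rring.
Qed.


Lemma Aser_eq : Aser = tX ⊗ Pf.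
Proof.
apply: fps_ext => [[|n]]; rewrite coef_tmul // /Aser /=.
by rewrite numI_cn.
Qed.

Definition t2 := tX ⊗ tX.

Lemma coef_t2 n : t2 n = if n == 2%N then 1 else 0.
Proof. by rewrite /t2 coef_tmul; case: n => [|[|[|n]]]. Qed.

Ltac polyc := apply: fps_ext => [[|[|[|n]]]];
  rewrite /fsub /fadd /fopp ?coef_t2 /tX /fone /fpoly /= ?nth_nil; rring.

Lemma P1_eq : fpoly [:: 1; -2; 2] = 𝟙 ⊖ (tX ⊕ tX) ⊕ (t2 ⊕ t2). Proof. polyc. Qed.
Lemma P2_eq : fpoly [:: 0; -3; 4] = t2 ⊕ t2 ⊕ t2 ⊕ t2 ⊖ (tX ⊕ tX ⊕ tX). Proof. polyc. Qed.
Lemma P3_eq : fpoly [:: 0; 0; 2] = t2 ⊕ t2. Proof. polyc. Qed.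
Lemma P4_eq : fpoly [:: 2; -4; 4] = 𝟙 ⊕ 𝟙 ⊖ (tX ⊕ tX ⊕ tX ⊕ tX) ⊕ (t2 ⊕ t2 ⊕ t2 ⊕ t2). Proof. polyc. Qed.
Lemma P5_eq : fpoly [:: 0; 3; -4] = tX ⊕ tX ⊕ tX ⊖ (t2 ⊕ t2 ⊕ t2 ⊕ t2). Proof. polyc. Qed.
Lemma P6_eq : fpoly [:: 0; -1] = fopp tX. Proof. polyc. Qed.

Definition Afs := tX ⊗ Pf.
Definition Ufs := tX ⊗ Qf.
Definition E0e := Pf ⊖ (𝟙 ⊕ tX ⊗ (𝟚 ⊗ Pf ⊕ Qf ⊕ tX ⊗ (Pf ⊗ Pf) ⊕ (Pf ⊖ 𝟙) ⊗ Qf)).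
Definition E1e := C1f ⊖ (𝟙 ⊕ tX ⊗ (𝟚 ⊗ C1f ⊕ 𝟚 ⊗ (tX ⊗ (C1f ⊗ Pf) ⊕ (C1f ⊖ 𝟙) ⊗ Qf) ⊕ Pf ⊕ 𝟚 ⊗ Qf)).
Definition Quad := (𝟙 ⊖ (tX ⊕ tX) ⊕ (t2 ⊕ t2)) ⊗ (Afs ⊗ Afs)
   ⊕ (t2 ⊕ t2 ⊕ t2 ⊕ t2 ⊖ (tX ⊕ tX ⊕ tX)) ⊗ Afs ⊕ (t2 ⊕ t2).

Lemma E0z : E0e = 𝟘. Proof. rewrite /E0e -EP; ring. Qed.
Lemma E1z : E1e = 𝟘. Proof. rewrite /E1e -EC; ring. Qed.

Lemma c0_add (f g : fps) : (f ⊕ g) 0%N = f 0%N + g 0%N. Proof. by []. Qed.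
Lemma c0_sub (f g : fps) : (f ⊖ g) 0%N = f 0%N - g 0%N. Proof. by []. Qed.
Lemma c0_tX : tX 0%N = 0. Proof. by []. Qed.
Lemma c0_one : 𝟙 0%N = 1. Proof. by []. Qed.

Lemma Quad0 : Quad = 𝟘.
Proof.
apply: (@unit_cancel (𝟙 ⊕ Afs)).
  by rewrite c0_add /Afs c0_mul c0_tX mul0r addr0 c0_one oner_eq0.
transitivity (𝟘 ⊖ Afs ⊗ Afs ⊗ tX ⊗ (E1e ⊖ E0e) ⊕ (Afs ⊗ Afs ⊕ 𝟚 ⊗ Afs ⊗ Ufs) ⊗ tX ⊗ E0e
   ⊕ tX ⊗ E0e ⊗ (𝟚 ⊗ (Afs ⊖ tX ⊖ tX ⊗ Afs) ⊖ Afs)).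
  rewrite /Quad /E1e /E0e /C1f /Afs /Ufs /t2; ring.
rewrite E0z E1z; ring.
Qed.

Local Close Scope fps_scope.
Definition sq := sqrt_1m8t.

Lemma gbinomS a k : gbinom a k.+1 = gbinom a k * (a - k%:R) / (k.+1)%:R.
Proof.
have h1 : (k`!)%:R != 0 :> rat by rewrite pnatr_eq0 -lt0n fact_gt0.
have h2 : (k.+1)%:R != 0 :> rat by rewrite pnatr_eq0.
rewrite /gbinom big_ord_recr /= factS natrM; rfield.
by rewrite h1 andbT addrC natr1.
Qed.

Lemma sS k : (k.+1)%:R * sq k.+1 = sq k * (8 * k%:R - 4).
Proof.
have h2 : (k.+1)%:R != 0 :> rat by rewrite pnatr_eq0.
have h3 : 2 != 0 :> rat by [].
rewrite /sq /sqrt_1m8t gbinomS exprS; rfield.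
by rewrite addrC natr1.
Qed.

Definition Qs m := fmul sq sq m.
Definition Ts m := \sum_(i < m.+1) i%:R * sq i * sq (m - i)%N.

Lemma L1 m : 2 * Ts m = m%:R * Qs m.
Proof.
have E : Ts m = \sum_(i < m.+1) (m - i)%:R * sq i * sq (m - i)%N.
  rewrite /Ts (reindex_inj rev_ord_inj) /=; apply: eq_bigr => i _.
  rewrite subSS subKn; last by rewrite -ltnS.
  by rewrite mulrAC.
have -> : 2 * Ts m = Ts m + Ts m by rring.
rewrite {2}E -big_split /Qs /fmul mulr_sumr; apply: eq_bigr => i _ /=.
rewrite -mulrDl -mulrDl -natrD subnKC ?mulrA //.
by rewrite -ltnS.
Qed.

Lemma L2 m : Ts m.+1 = 8 * Ts m - 4 * Qs m.
Proof.
rewrite /Ts big_ord_recl /= mul0r mul0r add0r /Qs /fmul mulr_sumr mulr_sumr -sumrB.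
apply: eq_bigr => i _; rewrite /bump /= add1n subSS.
rewrite sS; rring.
Qed.

Lemma L3 m : (m.+1)%:R * Qs m.+1 = (8 * m%:R - 8) * Qs m.
Proof.
rewrite -L1 L2.
have := L1 m; move=> H.
have -> : 2 * (8 * Ts m - 4 * Qs m) = 8 * (2 * Ts m) - 8 * Qs m by rring.
rewrite H; rring.
Qed.

Lemma sq0 : sq 0%N = 1.
Proof. by rewrite /sq /sqrt_1m8t /gbinom big_ord0 expr0 /= divr1 mulr1. Qed.

Lemma Qs0 : Qs 0 = 1. Proof. by rewrite /Qs c0_mul sq0 mulr1. Qed.
Lemma Qs1 : Qs 1 = -8.
Proof. have := L3 0; rewrite Qs0 mul1r mulr0 add0r mulr1 => ->; by []. Qed.
Lemma QsSS n : Qs n.+2 = 0.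
Proof.
elim: n => [|n IH].
  have := L3 1; rewrite Qs1 mulr1 subrr mul0r => /eqP; rewrite mulf_eq0 pnatr_eq0 /=.
  by move/eqP.
have := L3 n.+2; rewrite IH mulr0 => /eqP; rewrite mulf_eq0 pnatr_eq0 /=.
by move/eqP.
Qed.

Local Open Scope fps_scope.
Definition eight := tX ⊕ tX ⊕ tX ⊕ tX ⊕ tX ⊕ tX ⊕ tX ⊕ tX.

Lemma SS : sq ⊗ sq = 𝟙 ⊖ eight.
Proof.
apply: fps_ext => [[|[|n]]].
- by rewrite -/(Qs 0) Qs0 /fsub /fadd /fopp /eight /fadd /tX /fone /=; rring.
- by rewrite -/(Qs 1) Qs1 /fsub /fadd /fopp /eight /fadd /tX /fone /=; rring.
- by rewrite -/(Qs n.+2) QsSS /fsub /fadd /fopp /eight /fadd /tX /fone /=; rring.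
Qed.

Definition Dfs := 𝟙 ⊖ (tX ⊕ tX) ⊕ (t2 ⊕ t2).
Definition Wp := 𝟚 ⊗ Dfs ⊗ Afs ⊕ (t2 ⊕ t2 ⊕ t2 ⊕ t2 ⊖ (tX ⊕ tX ⊕ tX)).
Definition Vfs := 𝟚 ⊗ Dfs ⊗ Pf ⊕ (tX ⊕ tX ⊕ tX ⊕ tX ⊖ (𝟙 ⊕ 𝟙 ⊕ 𝟙)) ⊖ sq.

Lemma Wsum : Wp ⊕ tX ⊗ sq = 𝟘.
Proof.
have H1 : (Wp ⊖ tX ⊗ sq) ⊗ (Wp ⊕ tX ⊗ sq) = 𝟘.
  transitivity (𝟚 ⊗ 𝟚 ⊗ Dfs ⊗ Quad ⊕ t2 ⊗ ((𝟙 ⊖ eight) ⊖ sq ⊗ sq)).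
    rewrite /Wp /Quad /Dfs /eight /t2; ring.
  rewrite Quad0 SS; ring.
have H2 : Wp ⊖ tX ⊗ sq = tX ⊗ Vfs by rewrite /Wp /Vfs /Afs /Dfs /t2; ring.
rewrite H2 in H1.
have H3 : Vfs ⊗ (Wp ⊕ tX ⊗ sq) = 𝟘.
  apply: tX_cancel; transitivity ((tX ⊗ Vfs) ⊗ (Wp ⊕ tX ⊗ sq)); first ring.
  rewrite H1; ring.
apply: (@unit_cancel Vfs _ _ H3).
rewrite /Vfs !c0_sub !c0_add !c0_mul /Dfs !c0_add !c0_sub /t2 !c0_mul c0_tX c0_one Pf0 sq0.
by [].
Qed.

Theorem theorem4p7 :
  (forall n : nat,
     fadd (fadd (fmul (fpoly [:: 1; -2; 2]) (fmul Aser Aser))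
                (fmul (fpoly [:: 0; -3; 4]) Aser))
          (fpoly [:: 0; 0; 2]) n = 0)
  /\
  (forall n : nat,
     fmul (fpoly [:: 2; -4; 4]) Aser n
     = fadd (fpoly [:: 0; 3; -4]) (fmul (fpoly [:: 0; -1]) sqrt_1m8t) n).
Proof.
split=> n.
  rewrite P1_eq P2_eq P3_eq Aser_eq -/Afs.
  by have := congr1 (fun h => h n) Quad0; rewrite /Quad.
rewrite P4_eq P5_eq P6_eq Aser_eq -/Afs -/sq.
have E : (𝟙 ⊕ 𝟙 ⊖ (tX ⊕ tX ⊕ tX ⊕ tX) ⊕ (t2 ⊕ t2 ⊕ t2 ⊕ t2)) ⊗ Afs
   = (tX ⊕ tX ⊕ tX ⊖ (t2 ⊕ t2 ⊕ t2 ⊕ t2)) ⊕ fopp tX ⊗ sq ⊕ (Wp ⊕ tX ⊗ sq).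
  rewrite /Wp /Dfs; ring.
by rewrite E Wsum {1}/fadd /fzero addr0.
Qed.
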